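(* For every signed permutation $\pi\in\mathfrak{B}_n$, \[\mathfrak{d}_B(\pi)=2^{\operatorname{pe}_B(\pi)+\varsigma(\pi)}\sum_{\substack{D\subseteq\{0,1,\dots,n-1\}\\ \operatorname{Pe}_B(\pi)\subseteq D\,\triangle\,(D+1)\\ \pi(1)<0\ \Rightarrow\ 0\in D}}L_D,\] where $D+1=\{d+1:d\in D\}$ and $\triangle$ is symmetric difference.
   Context: $\mathfrak{B}_n$ is the group of signed permutations (bijections $\pi$ of $\{-n,\dots,n\}$ with $\pi(-i)=-\pi(i)$), written as words, with $\pi(0)=0$. $\operatorname{Pe}_B(\pi)$ is the set of $i\in\{1,\dots,n-1\}$ with $\pi(i-1)<\pi(i)>\pi(i+1)$, $\operatorname{pe}_B(\pi)=|\operatorname{Pe}_B(\pi)|$, and $\varsigma(\pi)$ is $0$ if $\pi(1)>0$ and $1$ if $\pi(1)<0$. Work in formal power series in commuting variables $z_0,z_1,\dots$. For $E=\{e_1<\dots<e_m\}\subseteq\{0,\dots,n-1\}$ put $e_{m+1}=n$ and $N_E=\sum_{0<i_1<\dots<i_m}z_0^{e_1}\prod_{r=1}^m z_{i_r}^{e_{r+1}-e_r}$ (so $N_\emptyset=z_0^n$), and $L_D=\sum_{D\subseteq T\subseteq\{0,\dots,n-1\}}N_T$. Let $Z$ be the totally ordered set $0<\bar1<1<\bar2<2<\cdots$, with $0$ and unbarred $j$ ''plus-type'' and barred $\bar j$ ''minus-type'', and $|0|=0$, $|\bar j|=|j|=j$. Define $\mathfrak{d}_B(\pi)=\sum\prod_{s=1}^n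 z_{|a_s|}$, summed over all sequences $(a_1,\dots,a_n)\in Z^n$ such that, with $a_0=0$, $a_0\le a_1\le\dots\le a_n$ and for each $s\in\{0,\dots,n-1\}$: if $\pi(s)<\pi(s+1)$ then $a_s<a_{s+1}$ or ($a_s=a_{s+1}$ is plus-type); if $\pi(s)>\pi(s+1)$ then $a_s<a_{s+1}$ or ($a_s=a_{s+1}$ is minus-type). *)

(* Defs.v *)
From mathcomp Require Import all_boot all_order all_algebra.
Set Implicit Arguments. Unset Strict Implicit. Unset Printing Implicit Defensive.
Import Order.TTheory GRing.Theory Num.Theory.

(* Signed permutations, written as words w = [pi(1); ...; pi(n)] of ints  *)
(* with |pi(1)|,...,|pi(n)| a permutation of 1..n.  pi(0) = 0.            *)
Definition is_signed_perm (n : nat) (w : seq int) : bool :=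
  perm_eq (map absz w) (iota 1 n).

Definition piv (w : seq int) (i : nat) : int :=
  if i is j.+1 then nth 0%R w j else 0%R.

Definition PeB (n : nat) (w : seq int) : seq nat :=
  [seq i <- iota 1 n.-1 | (piv w i.-1 < piv w i)%R && (piv w i.+1 < piv w i)%R].

Definition peB (n : nat) (w : seq int) : nat := size (PeB n w).

Definition varsigma (w : seq int) : nat := (piv w 1 < 0)%R.

(* Formal power series in commuting variables z_0, z_1, ... with          *)
(* nonnegative integer coefficients are represented by their coefficient  *)
(* function  seq nat -> nat : the monomial z_{x_1} ... z_{x_k} is encoded *)
(* by the sorted list [x_1 <= ... <= x_k] of its variable indices (with   *)
(* multiplicity).  The monomial of an arbitrary list s of indices is      *)
(* sort leq s.  A sum  Sum_t  prod(word t)  has coefficient at m the      *)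
(* number of t with sort leq (word t) = m.  Each sum below ranges over a  *)
(* countable family; for a fixed m only finitely many terms can produce   *)
(* m, and we count over an explicit finite range containing them all.     *)
Definition maxl (m : seq nat) : nat := foldr maxn 0 m.

(* The totally ordered set Z = 0 < 1bar < 1 < 2bar < 2 < ... is encoded   *)
(* by nat codes: 0 |-> 0, jbar |-> 2j-1, j |-> 2j (j >= 1).  This is an   *)
(* order isomorphism onto nat.  |c| = uphalf c; plus-type iff c is even.  *)
Definition Zabs (c : nat) : nat := uphalf c.
Definition Zplus (c : nat) : bool := ~~ odd c.
Definition Zminus (c : nat) : bool := odd c.

Definition dB_valid (n : nat) (w : seq int) (a : seq nat) : bool :=
  let a' := 0 :: a in
  [forall s : 'I_n,
     let x := nth 0 a' s in let y := nth 0 a' s.+1 in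
     [&& x <= y,
         (piv w s < piv w s.+1)%R ==> ((x < y) || ((x == y) && Zplus x))
       & (piv w s.+1 < piv w s)%R ==> ((x < y) || ((x == y) && Zminus x))]].

(* |a_s| in m, hence code a_s <= 2 * max m.                               *)
Definition coef_dB (n : nat) (w : seq int) (m : seq nat) : nat :=
  #|[pred a : n.-tuple 'I_(2 * maxl m).+1 |
       dB_valid n w (map val a) && (sort leq (map Zabs (map val a)) == m)]|.

(* The word of the term of N_E indexed by 0 < i_1 < ... < i_k, where      *)
(* es = [e_1 < ... < e_k] and e_{k+1} = n:                                *)
(*   z_0^{e_1} prod_r z_{i_r}^{e_{r+1} - e_r}.                            *)
Definition NE_word (n : nat) (es ix : seq nat) : seq nat :=
  nseq (nth n es 0) 0 ++
  flatten [seq nseq (nth n es r.+1 - nth n es r) (nth 0 ix r)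
          | r <- iota 0 (size es)].

Definition elems (n : nat) (E : {set 'I_n}) : seq nat :=
  sort leq [seq val i | i in E].

(* (exponent e_{r+1} - e_r > 0), hence i_r <= max m.                      *)
Definition coef_N (n : nat) (E : {set 'I_n}) (m : seq nat) : nat :=
  let es := elems E in
  #|[pred ix : (size es).-tuple 'I_(maxl m).+1 |
       sorted ltn (0 :: map val ix)
       && (sort leq (NE_word n es (map val ix)) == m)]|.

Definition coef_L (n : nat) (D : {set 'I_n}) (m : seq nat) : nat :=
  \sum_(T : {set 'I_n} | D \subset T) coef_N T m.

Definition admissible (n : nat) (w : seq int) (D : {set 'I_n}) : bool :=
  let Dn := [seq val i | i in D] in
  let D1 := [seq (val i).+1 | i in D] in
  all (fun i => (i \in Dn) (+) (i \in D1)) (PeB n w)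
  && ((piv w 1 < 0)%R ==> (0 \in Dn)).

(* Main.v *)
Require Import Defs.
From mathcomp Require Import all_boot all_order all_algebra.
From mathcomp Require Import zify.
Set Implicit Arguments. Unset Strict Implicit. Unset Printing Implicit Defensive.
Import Order.TTheory GRing.Theory Num.Theory.

Lemma card_predE (T : finType) (P : pred T) : #|[pred t | P t]| = \sum_(t | P t) 1.
Proof. by rewrite sum1_card. Qed.

Lemma card_tuple_cons (T : finType) k (P : seq T -> bool) :
  #|[pred t : k.+1.-tuple T | P t]| =
  \sum_(x : T) #|[pred t : k.-tuple T | P (x :: t)]|.
Proof.
rewrite card_predE; symmetry.
under eq_bigr => x _ do rewrite (card_predE (fun t : k.-tuple T => P (x :: t))).
rewrite pair_big_dep /=; symmetry.
rewrite (reindex (fun p : T * k.-tuple T => [tuple of p.1 :: p.2])) /=.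
  by apply: eq_bigl => -[x t].
exists (fun t : k.+1.-tuple T => (thead t, [tuple of behead t])).
  by move=> [x t] _ /=; rewrite theadE; congr pair; apply: val_inj.
by move=> t _ /=; rewrite [in RHS](tuple_eta t).
Qed.

Lemma card_tuple0 (T : finType) (P : seq T -> bool) :
  #|[pred t : 0.-tuple T | P t]| = P [::].
Proof.
rewrite card_predE big_mkcond /=.
rewrite (eq_bigr (fun _ => (P [::] : nat))); last by move=> t _; rewrite tuple0.
by rewrite sum_nat_const card_tuple /=; case: (P [::]).
Qed.

Definition zrel (u : bool) (x y : nat) : bool :=
  [&& x <= y, u ==> (x < y) || (x == y) && ~~ odd x & ~~ u ==> (x < y) || (x == y) && odd x].

Fixpoint okc (x : nat) (us : seq bool) (vs : seq nat) (c : seq nat) : bool :=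
  match us, vs, c with
  | [::], [::], [::] => true
  | u :: us', v :: vs', y :: c' => zrel u x y && (uphalf y == v) && okc y us' vs' c'
  | _, _, _ => false
  end.

Definition F k B x us vs := #|[pred c : k.-tuple 'I_B | okc x us vs (map val c)]|.

Fixpoint Ysf (pv : nat) (d u : bool) (us : seq bool) (vs : seq nat) : nat :=
  match us, vs with
  | [::], [::] => 1
  | up :: us', v :: vs' =>
      (pv <= v) *
      ((if u && ~~ up then 2 * (false != d) else 1) * Ysf v false up us' vs' +
       (pv < v) * (if u && ~~ up then 2 * (true != d) else 1) * Ysf v true up us' vs')
  | _, _ => 0
  end.

Lemma card_andb (T : finType) (b : bool) (P : pred T) :
  #|[pred t | b && P t]| = b * #|[pred t | P t]|.
Proof. by case: b; rewrite ?mul1n ?mul0n //; apply: eq_card0. Qed.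

Lemma F_cons k B x u us v vs :
  F k.+1 B x (u :: us) (v :: vs) =
  \sum_(y : 'I_B) (zrel u x y && (uphalf y == v)) * F k B y us vs.
Proof.
rewrite /F (card_tuple_cons _ (fun s : seq 'I_B => okc x (u :: us) (v :: vs) (map val s))); apply: eq_bigr => y _ /=.
by rewrite -card_andb.
Qed.

Lemma F0 B x us vs : F 0 B x us vs = okc x us vs [::].
Proof. by rewrite /F (card_tuple0 (fun s : seq 'I_B => okc x us vs (map val s))). Qed.

Lemma F_nil_l k B x vs : F k B x [::] vs = (k == 0) && (vs == [::]).
Proof.
case: k => [|k]; first by rewrite F0; case: vs.
rewrite /F (card_tuple_cons _ (fun s : seq 'I_B => okc x [::] vs (map val s))) big1 //.
by move=> y _; apply: eq_card0 => t; rewrite !inE; case: vs.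
Qed.

Lemma F_nil_r k B x us : F k B x us [::] = (k == 0) && (us == [::]).
Proof.
case: k => [|k]; first by rewrite F0; case: us.
rewrite /F (card_tuple_cons _ (fun s : seq 'I_B => okc x us [::] (map val s))) big1 //.
by move=> y _; apply: eq_card0 => t; rewrite !inE; case: us.
Qed.

Lemma sum_uphalf B v (h : nat -> nat) :
  \sum_(y < B) (uphalf y == v) * h y =
  if v == 0 then (0 < B) * h 0
  else (2 * v - 1 < B) * h (2 * v - 1) + (2 * v < B) * h (2 * v).
Proof.
elim: B => [|B IH]; first by rewrite big_ord0; case: (v == 0).
rewrite big_ord_recr /= IH.
have [e|ne] := eqVneq (uphalf B) v.
  case: (eqVneq v 0) => [v0|vn0].
    have B0 : B = 0 by lia.
    by rewrite B0; lia.
  have [oB|eB] := boolP (odd B).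
    have -> : 2 * v - 1 = B by lia.
    have l1 : (B < B) = false by lia.
    have l2 : (B < B.+1) = true by lia.
    have l3 : (2 * v < B) = false by lia.
    have l4 : (2 * v < B.+1) = false by lia.
    by rewrite l1 l2 l3 l4; lia.
  have -> : 2 * v = B by lia.
  have l1 : (B.-1 < B) = true by lia.
  have l2 : (B.-1 < B.+1) = true by lia.
  have l3 : (B < B) = false by lia.
  have -> : B - 1 = B.-1 by lia.
  rewrite l1 l2 l3 ltnSn; lia.
case: (eqVneq v 0) => [v0|vn0].
  subst => /=; have -> : 0 < B by lia.
  lia.
have l1 : (2 * v - 1 < B.+1) = (2 * v - 1 < B) by lia.
have l2 : (2 * v < B.+1) = (2 * v < B) by lia.
rewrite l1 l2; lia.
Qed.

Lemma sum_codes B v (P : nat -> bool) (g : nat -> nat) : 2 * v < B ->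
  \sum_(y : 'I_B) (P y && (uphalf y == v)) * g y =
  if v == 0 then P 0 * g 0
  else P (2 * v - 1) * g (2 * v - 1) + P (2 * v) * g (2 * v).
Proof.
move=> vB.
rewrite (eq_bigr (fun y : 'I_B => (uphalf y == v) * (P y * g y))); last first.
  by move=> y _; case: (P y); case: (uphalf y == v); rewrite ?mul0n ?mul1n.
rewrite (sum_uphalf B v (fun y => P y * g y)).
case: (eqVneq v 0) => [v0|vn0]; first by subst => /=; rewrite (_ : 0 < B) ?mul1n //; lia.
have -> : 2 * v - 1 < B by lia.
by rewrite vB !mul1n.
Qed.

Lemma zrel_lt u x y : x < y -> zrel u x y.
Proof. by move=> h; rewrite /zrel (ltnW h) h; case: u. Qed.

Lemma zrel_gt u x y : y < x -> zrel u x y = false.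
Proof. by move=> h; rewrite /zrel leqNgt h. Qed.

Lemma zrel_eq u x : zrel u x x = (if u then ~~ odd x else odd x).
Proof. by rewrite /zrel leqnn ltnn eqxx; case: u; case: (odd x). Qed.

Definition Sv (P : nat -> bool) v (g : nat -> nat) :=
  if v == 0 then P 0 * g 0 else P (2 * v - 1) * g (2 * v - 1) + P (2 * v) * g (2 * v).

Lemma sum_codes' B v (P : nat -> bool) (g : nat -> nat) : 2 * v < B ->
  \sum_(y : 'I_B) (P y && (uphalf y == v)) * g y = Sv P v g.
Proof. exact: sum_codes. Qed.

Lemma S_gt u x v g : v < uphalf x -> Sv (zrel u x) v g = 0.
Proof.
move=> h; rewrite /Sv; case: ifP => _.
  by rewrite zrel_gt //; lia.
by rewrite !zrel_gt //; lia.
Qed.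

Lemma S_lt u x v g : uphalf x < v -> Sv (zrel u x) v g = g (2 * v - 1) + g (2 * v).
Proof.
move=> h; rewrite /Sv ifN; last by lia.
by rewrite !zrel_lt ?mul1n //; lia.
Qed.

Lemma S_eq0 u g : Sv (zrel u 0) 0 g = u * g 0.
Proof. by rewrite /Sv /= zrel_eq /=; case: u. Qed.

Lemma S_eqp u v g : 0 < v -> Sv (zrel u (2 * v)) v g = u * g (2 * v).
Proof.
move=> h; rewrite /Sv ifN; last by lia.
have o : odd (2 * v) = false by lia.
by rewrite zrel_gt ?zrel_eq ?o //=; [case: u | lia].
Qed.

Lemma S_eqm u v g : 0 < v -> Sv (zrel u (2 * v - 1)) v g = (~~ u) * g (2 * v - 1) + g (2 * v).
Proof.
move=> h; rewrite /Sv ifN; last by lia.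
have o : odd (2 * v - 1) = true by lia.
by rewrite zrel_eq zrel_lt ?o /=; [case: u; rewrite ?mul1n ?mul0n | lia].
Qed.

Lemma main_inv M B us : 2 * M < B -> forall vs, all (fun v => v <= M) vs ->
  (forall x, F (size us) B x us vs = Ysf (uphalf x) (odd x) true us vs) /\
  (forall pv d, 0 < pv -> pv <= M ->
     F (size us) B (2 * pv - 1) us vs + F (size us) B (2 * pv) us vs =
     2 * Ysf pv d false us vs).
Proof.
move=> MB; elim: us => [|u us IH] vs hv.
  by case: vs hv => [|v vs] hv; split => [x|pv d _ _]; rewrite /= ?F0.
case: vs hv => [|v vs] hv.
  by split => [x|pv d _ _]; rewrite /= ?F_nil_r.
move: hv => /= /andP [vM hv]; have [IH1 IH2] := IH vs hv.
set g := fun y => F (size us) B y us vs.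
have hp : g (2 * v) = Ysf v false true us vs.
  have e1 : uphalf (2 * v) = v by lia.
  have e2 : odd (2 * v) = false by lia.
  by rewrite /g IH1 e1 e2.
have hm : 0 < v -> g (2 * v - 1) = Ysf v true true us vs.
  move=> v0; have e1 : uphalf (2 * v - 1) = v by lia.
  have e2 : odd (2 * v - 1) = true by lia.
  by rewrite /g IH1 e1 e2.
have y1 : 0 < v -> g (2 * v - 1) + g (2 * v) = 2 * Ysf v false false us vs.
  by move=> v0; apply: IH2.
have y2 : 0 < v -> g (2 * v - 1) + g (2 * v) = 2 * Ysf v true false us vs.
  by move=> v0; apply: IH2.
have h0 : g 0 = Ysf 0 false true us vs by rewrite /g IH1.
have Fc : forall x, F (size us).+1 B x (u :: us) (v :: vs) = Sv (zrel u x) v g.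
  by move=> x; rewrite F_cons (@sum_codes' B v (zrel u x) g) //; lia.
split.
  move=> x; rewrite Fc /=; clear Fc.
  case: (ltngtP v (uphalf x)) => [lt|gt|eq].
  - by rewrite S_gt.
  - have v0 : 0 < v by lia.
    rewrite S_lt //.
    move: (hm v0) (y1 v0) (y2 v0) => hm' y1' y2'.
    case: u => /=; first by rewrite hp hm'; lia.
    by case: (odd x) => /=; lia.
  - case: (eqVneq v 0) => [v0|vn0].
      have x0 : x = 0 by lia.
      subst v x; rewrite S_eq0 h0.
      by case: u => /=; lia.
    have v0 : 0 < v by lia.
    case/orP: (orbN (odd x)) => ox.
      have -> : x = 2 * v - 1 by lia.
      rewrite S_eqm //.
      move: (hm v0) (y1 v0) => hm' y1'.
      by case: u => /=; lia.
    have -> : x = 2 * v by lia.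
    rewrite S_eqp // hp.
    by case: u => /=; lia.
move=> pv d pv0 pvM; rewrite !Fc /=; clear Fc.
case: (ltngtP v pv) => [lt|gt|eq].
- by rewrite !S_gt //; lia.
- have v0 : 0 < v by lia.
  rewrite !S_lt //; try lia.
  move: (hm v0) (y1 v0) (y2 v0) => hm' y1' y2'.
  by case: u => /=; lia.
- subst pv.
  rewrite S_eqm // S_eqp //.
  move: (hm pv0) (y1 pv0) => hm' y1'.
  by case: u => /=; lia.
Qed.

Fixpoint okd (pv : nat) (d u : bool) (us : seq bool) (vs : seq nat) (t : seq bool) : bool :=
  match us, vs, t with
  | [::], [::], [::] => true
  | up :: us', v :: vs', e :: t' =>
      [&& pv <= v, e ==> (pv < v), (u && ~~ up) ==> (e != d) & okd v e up us' vs' t']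
  | _, _, _ => false
  end.

Fixpoint wt (u : bool) (us : seq bool) : nat :=
  match us with [::] => 0 | up :: us' => (u && ~~ up) + wt up us' end.

Definition G k pv d u us vs := #|[pred t : k.-tuple bool | okd pv d u us vs t]|.

Lemma G_cons k pv d u up us v vs :
  G k.+1 pv d u (up :: us) (v :: vs) =
  \sum_(e : bool) [&& pv <= v, e ==> (pv < v) & (u && ~~ up) ==> (e != d)] *
                  G k v e up us vs.
Proof.
rewrite /G (card_tuple_cons _ (fun s => okd pv d u (up :: us) (v :: vs) s)).
apply: eq_bigr => e _ /=.
by rewrite -card_andb; apply: eq_card => t; rewrite !inE /= !andbA.
Qed.

Lemma G_Ysf us : forall vs pv d u,
  G (size us) pv d u us vs * 2 ^ (wt u us) = Ysf pv d u us vs.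
Proof.
elim: us => [|up us IH] [|v vs] pv d u.
- by rewrite /G (card_tuple0 (fun s => okd pv d u [::] [::] s)).
- by rewrite /G (card_tuple0 (fun s => okd pv d u [::] (v :: vs) s)).
- rewrite /G (card_tuple_cons _ (fun s => okd pv d u (up :: us) [::] s)) big1 //.
  by move=> e _; apply: eq_card0 => t; rewrite !inE.
- rewrite /= G_cons big_bool /= expnD -(IH vs v true up) -(IH vs v false up).
  by case: u; case: up; case: d; case: (pv <= v); case: (pv < v); rewrite /=; nia.
Qed.

Lemma all_iotaS (P : nat -> bool) k :
  all P (iota 0 k.+1) = P 0 && all (fun s => P s.+1) (iota 0 k).
Proof. by rewrite /= -(addn0 1) iotaDl all_map. Qed.

Lemma okcP c : forall x us vs,
  okc x us vs c =
  [&& size us == size c, size vs == size c &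
      all (fun s => zrel (nth false us s) (nth 0 (x :: c) s) (nth 0 (x :: c) s.+1)
                    && (uphalf (nth 0 c s) == nth 0 vs s)) (iota 0 (size c))].
Proof.
elim: c => [|y c IH] x [|u us] [|v vs] //=; first by rewrite andbF.
rewrite IH -[1]/(1 + 0) iotaDl all_map !eqSS.
by case: (size us == size c); case: (size vs == size c); case: (zrel u x y && (uphalf y == v)).
Qed.

Definition ups (n : nat) (w : seq int) : seq bool :=
  [seq (piv w s < piv w s.+1)%R | s <- iota 0 n].

Lemma size_ups n w : size (ups n w) = n.
Proof. by rewrite size_map size_iota. Qed.

Lemma nth_ups n w s : s < n -> nth false (ups n w) s = (piv w s < piv w s.+1)%R.
Proof. by move=> sn; rewrite (nth_map 0) ?size_iota // nth_iota. Qed.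

Lemma perm_size_w n w : is_signed_perm n w -> size w = n.
Proof. by move=> /perm_size; rewrite size_map size_iota. Qed.

Lemma piv_neq n w : is_signed_perm n w -> forall s, s < n -> piv w s != piv w s.+1.
Proof.
move=> hp s sn.
have sw := perm_size_w hp.
have uq : uniq (map absz w) by rewrite (perm_uniq hp) iota_uniq.
have ab : forall i, i < n -> 0 < absz (nth 0%R w i).
  move=> i ilt.
  have : absz (nth 0%R w i) \in iota 1 n.
    by rewrite -(perm_mem hp); apply/mapP; exists (nth 0%R w i) => //; apply: mem_nth; rewrite sw.
  by rewrite mem_iota => /andP [].
case: s sn => [|s] sn /=.
  by apply/eqP => h; move: (ab 0 sn); rewrite -h.
apply/eqP => h.
have : nth 0 (map absz w) s == nth 0 (map absz w) s.+1.
  by rewrite !(nth_map 0%R) ?sw ?h //; lia.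
by rewrite nth_uniq ?size_map ?sw //; lia.
Qed.

Lemma dB_validE n w c :
  dB_valid n w c =
  all (fun s : nat =>
     let x := nth 0 (0 :: c) s in let y := nth 0 (0 :: c) s.+1 in
     [&& x <= y,
         (piv w s < piv w s.+1)%R ==> ((x < y) || ((x == y) && Zplus x))
       & (piv w s.+1 < piv w s)%R ==> ((x < y) || ((x == y) && Zminus x))])
   (iota 0 n).
Proof.
apply/forallP/allP => [H s|H s].
  by rewrite mem_iota => /andP [_ sn]; exact: (H (Ordinal sn)).
by apply: H; rewrite mem_iota ltn_ord.
Qed.

Lemma lhs_link n w m : is_signed_perm n w ->
  coef_dB n w m = F n (2 * maxl m).+1 0 (ups n w) m.
Proof.
move=> hp; rewrite /coef_dB /F; apply: eq_card => a; rewrite !inE.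
set c := map val a.
have sc : size c = n by rewrite size_map size_tuple.
rewrite okcP sc size_ups eqxx /= dB_validE.
have E : forall s, s \in iota 0 n ->
   (let x := nth 0 (0 :: c) s in let y := nth 0 (0 :: c) s.+1 in
     [&& x <= y,
         (piv w s < piv w s.+1)%R ==> ((x < y) || ((x == y) && Zplus x))
       & (piv w s.+1 < piv w s)%R ==> ((x < y) || ((x == y) && Zminus x))]) =
   zrel (nth false (ups n w) s) (nth 0 (0 :: c) s) (nth 0 (0 :: c) s.+1).
  move=> s; rewrite mem_iota => /andP [_ sn] /=.
  rewrite nth_ups //.
  have ne := piv_neq hp sn.
  have -> : (piv w s.+1 < piv w s)%R = ~~ (piv w s < piv w s.+1)%R.
    by rewrite -leNgt le_eqVlt eq_sym (negbTE ne).
  by rewrite /zrel /Zplus /Zminus.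
rewrite (eq_in_all E).
rewrite (eq_all (a1 := fun s => zrel (nth false (ups n w) s) (nth 0 (0 :: c) s) (nth 0 c s) &&
     (uphalf (nth 0 c s) == nth 0 m s))
   (a2 := predI (fun s => zrel (nth false (ups n w) s) (nth 0 (0 :: c) s) (nth 0 (0::c) s.+1))
                (fun s => uphalf (nth 0 c s) == nth 0 m s))) // all_predI.
set R := all _ (iota 0 n).
have [HR|HR] := boolP R; last by rewrite /= andbF.
rewrite /=.
have srt : sorted leq (map Zabs c).
  rewrite sorted_map; apply: (sub_sorted (e := leq)).
    by move=> x y; apply: uphalf_leq.
  have : path leq 0 c.
    apply/(pathP 0) => i; rewrite sc => ilt.
    by move/allP: HR => /(_ i); rewrite mem_iota ilt /= => /(_ isT) /andP [].
  by case: (c) => //= x l /andP [].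
rewrite (sorted_sort leq_trans srt).
apply/eqP/andP => [<-|[/eqP sm H]].
  split; first by rewrite size_map sc.
  apply/allP => s; rewrite mem_iota => /andP [_ sn] /=.
  by rewrite (nth_map 0) ?sc.
apply: (eq_from_nth (x0 := 0)); first by rewrite size_map sc sm.
move=> i; rewrite size_map sc => ilt.
move/allP: H => /(_ i); rewrite mem_iota ilt /= => /(_ isT) /eqP <-.
by rewrite (nth_map 0) ?sc.
Qed.

Definition blocks n es (ix : seq nat) :=
  flatten [seq nseq (nth n es r.+1 - nth n es r) (nth 0 ix r) | r <- iota 0 (size es)].

Lemma blocks_cons n e es x ix :
  blocks n (e :: es) (x :: ix) = nseq (nth n es 0 - e) x ++ blocks n es ix.
Proof. by rewrite /blocks /= -[1]/(1 + 0) iotaDl -map_comp. Qed.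

Lemma count_all0 (a : pred nat) s : all (fun e => ~~ a e) s -> count a s = 0.
Proof.
move=> H; rewrite -(count_pred0 s); apply: eq_in_count => e /(allP H) /=.
by case: (a e).
Qed.

Lemma Wd_nth n es : sorted ltn es -> all (fun e => e < n) es ->
  forall p x0 ix, size ix = size es -> all (fun e => p <= e) es -> p <= n ->
  size (nseq (nth n es 0 - p) x0 ++ blocks n es ix) = n - p /\
  forall j, j < n - p ->
    nth 0 (nseq (nth n es 0 - p) x0 ++ blocks n es ix) j =
    nth 0 (x0 :: ix) (count (fun e => e <= p + j) es).
Proof.
elim: es => [|e es IH] srt aln p x0 [|x ix] //= szix ap pn.
  rewrite /blocks /= cats0 size_nseq; split => // j jn.
  by rewrite nth_nseq jn.
case: szix => szix.
move: ap aln => /andP [pe ap] /andP [en aln].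
have srt' : sorted ltn es by apply: (path_sorted srt).
have ae : all (fun f => e < f) es by apply: (order_path_min ltn_trans srt).
have ae' : all (fun f => e <= f) es by apply/allP => f /(allP ae) /ltnW.
have [IHs IHn] := IH srt' aln e x ix szix ae' (ltnW en).
rewrite blocks_cons.
split.
  rewrite size_cat size_nseq IHs.
  have : e <= nth n es 0.
    by case: (es) ae' => [|f l] /=; [move=> _; apply: ltnW | case/andP].
  lia.
move=> j jn.
rewrite nth_cat size_nseq.
case: ltnP => hj.
  rewrite nth_nseq hj.
  have -> : (e <= p + j) = false by lia.
  rewrite add0n count_all0 //.
  by apply/allP => f /(allP ae) ef; lia.
rewrite IHn; last by lia.
have -> : (e <= p + j) = true by lia.
by rewrite add1n /= (_ : e + (j - (e - p)) = p + j) //; lia.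
Qed.

Lemma NE_nth n es ix : sorted ltn es -> all (fun e => e < n) es -> size ix = size es ->
  size (NE_word n es ix) = n /\
  forall j, j < n -> nth 0 (NE_word n es ix) j = nth 0 (0 :: ix) (count (fun e => e <= j) es).
Proof.
move=> srt aln szix.
have a0 : all (fun e => 0 <= e) es by apply/allP.
have [h1 h2] := Wd_nth srt aln 0 szix a0 (leq0n n).
rewrite subn0 in h1 h2.
have -> : NE_word n es ix = nseq (nth n es 0) 0 ++ blocks n es ix by [].
rewrite subn0 in h1 h2; split; first by [].
by move=> j jn; rewrite h2.
Qed.

Lemma cnt_S es j : uniq es ->
  count (fun e => e <= j) es = count (fun e => e < j) es + (j \in es).
Proof.
move=> u; rewrite -(count_uniq_mem j u) -count_predUI.
rewrite (@eq_count _ (predI _ _) pred0); last by move=> e /=; lia.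
rewrite count_pred0 addn0; apply: eq_count => e /=; lia.
Qed.

Lemma cnt_idx es j : sorted ltn es -> j \in es ->
  count (fun e => e < j) es = index j es.
Proof.
elim: es => [|e es IH] //= srt.
have ae : all (fun f => e < f) es by apply: (order_path_min ltn_trans srt).
have srt' : sorted ltn es by apply: (path_sorted srt).
rewrite in_cons => /orP [/eqP ->|jes].
  rewrite eqxx ltnn add0n count_all0 //.
  by apply/allP => f /(allP ae) /=; lia.
have ej : e < j by apply: (allP ae).
have -> : (e == j) = false by lia.
by rewrite ej IH.
Qed.

Lemma nth_lt_iff (L : seq nat) a b : sorted ltn (0 :: L) -> a <= size L -> b <= size L ->
  (nth 0 (0 :: L) a < nth 0 (0 :: L) b) = (a < b).
Proof.
move=> srt al bl.
have mono := sorted_ltn_nth ltn_trans 0 srt.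
case: (ltngtP a b) => h.
- by apply: mono => //; rewrite inE /=; lia.
- apply/negbTE; rewrite -leqNgt; apply: ltnW; apply: mono => //; rewrite inE /=; lia.
- by rewrite h ltnn.
Qed.

Lemma nth_le (L : seq nat) a b : sorted ltn (0 :: L) -> a <= b -> b <= size L ->
  nth 0 (0 :: L) a <= nth 0 (0 :: L) b.
Proof.
move=> srt ab bl; rewrite leqNgt nth_lt_iff //; lia.
Qed.

Lemma card_val_tuple k M (L0 : seq nat) : size L0 = k -> all (fun x => x <= M) L0 ->
  #|[pred t : k.-tuple 'I_M.+1 | map val t == L0]| = 1.
Proof.
move=> szL aL.
have sz : size (map (@inord M) L0) == k by rewrite size_map szL.
apply: (eq_card1 (x := Tuple sz)) => t; rewrite !inE.
have E : map val (map (@inord M) L0) = L0.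
  rewrite -map_comp -[RHS]map_id; apply/eq_in_map => x /(allP aL) xM /=.
  by rewrite inordK.
apply/eqP/eqP => [h|->].
  apply: val_inj => /=; rewrite -h -map_comp -[LHS]map_id.
  by apply: eq_map => i /=; rewrite inord_val.
by [].
Qed.

Lemma nth_maxl (m : seq nat) i : nth 0 m i <= maxl m.
Proof.
elim: m i => [|x m IH] [|i] //=; first by rewrite leq_maxl.
by apply: leq_trans (IH i) _; rewrite leq_maxr.
Qed.

Definition Aset n (m : seq nat) : {set 'I_n} :=
  [set s : 'I_n | nth 0 (0 :: m) s < nth 0 (0 :: m) s.+1].

Lemma elems_props n (T : {set 'I_n}) :
  [/\ sorted ltn (elems T), all (fun e => e < n) (elems T) &
      forall s : 'I_n, (val s \in elems T) = (s \in T)].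
Proof.
rewrite /elems; split.
- rewrite ltn_sorted_uniq_leq sort_uniq (sort_sorted leq_total) andbT.
  by rewrite (map_inj_uniq val_inj) enum_uniq.
- by apply/allP => e; rewrite mem_sort => /mapP [i _ ->]; exact: ltn_ord.
- by move=> s; rewrite mem_sort (mem_map val_inj) mem_enum.
Qed.

Lemma NE_equiv n (T : {set 'I_n}) m L : size L = size (elems T) ->
  (sorted ltn (0 :: L) && (sort leq (NE_word n (elems T) L) == m)) =
  (sorted leq m && (size m == n) && (T == Aset n m)) &&
  (L == [seq nth 0 m e | e <- elems T]).
Proof.
move=> szL; have [srt aln memT] := elems_props T.
set es := elems T in szL srt aln memT *.
have uq : uniq es := sorted_uniq ltn_trans ltnn srt.
have [szW nthW] := NE_nth srt aln szL.
set W := NE_word n es L in szW nthW *.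
have cS : forall j, count (fun e => e < j.+1) es = count (fun e => e <= j) es.
  by move=> j; apply: eq_count => e /=; rewrite ltnS.
have nthW0 : forall j, j <= n -> nth 0 (0 :: W) j = nth 0 (0 :: L) (count (fun e => e < j) es).
  move=> [|j] jn /=; first by rewrite count_all0 //; apply/allP.
  by rewrite nthW // cS.
have cL : forall (a : pred nat), count a es <= size L.
  by move=> a; rewrite szL count_size.
apply/idP/idP.
  case/andP => sL /eqP hm.
  have sW : sorted leq W.
    apply/(sortedP 0) => i; rewrite szW => iln.
    rewrite !nthW; try lia.
    apply: nth_le => //; apply: sub_count => e /=; lia.
  move: hm; rewrite (sorted_sort leq_trans sW) => hm; subst m.
  rewrite sW szW eqxx /=.
  apply/andP; split.
    apply/eqP/setP => s; rewrite inE -memT.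
    have sn := ltn_ord s.
    rewrite !nthW0 //; last by lia.
    rewrite nth_lt_iff // cS cnt_S //.
    by case: (val s \in es); lia.
  apply/eqP/(eq_from_nth (x0 := 0)); first by rewrite size_map.
  move=> r rL; rewrite (nth_map 0); last by rewrite -szL.
  have ees : nth 0 es r \in es by apply: mem_nth; rewrite -szL.
  have en : nth 0 es r < n := allP aln _ ees.
  by rewrite nthW // cnt_S // cnt_idx // ees addn1 /= index_uniq // -szL.
case/andP => [/andP [/andP [sm /eqP szm] /eqP hT] /eqP hL].
have memA : forall j, j < n -> (j \in es) = (nth 0 (0 :: m) j < nth 0 (0 :: m) j.+1).
  by move=> j jn; have := memT (Ordinal jn); rewrite hT inE /= => ->.
have mle : forall i j, i <= j -> j < n -> nth 0 m i <= nth 0 m j.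
  move=> i j ij jn; apply: (sorted_leq_nth leq_trans leqnn 0 sm) => //;
  rewrite inE szm //; lia.
have hidx : forall j, j \in es -> nth 0 (0 :: L) (index j es).+1 = nth 0 m j.
  by move=> j je; rewrite /= hL (nth_map 0) ?index_mem // nth_index.
have sL : sorted ltn (0 :: L).
  rewrite hL; apply/(pathP 0) => i; rewrite size_map => ilt.
  rewrite (nth_map 0) //.
  have ees : nth 0 es i \in es by apply: mem_nth.
  have en : nth 0 es i < n := allP aln _ ees.
  have := memA _ en; rewrite ees => /esym hlt.
  case: i ilt ees en hlt => [|i] ilt ees en hlt /=.
    by apply: leq_ltn_trans hlt.
  rewrite (nth_map 0); last by lia.
  have lt : nth 0 es i < nth 0 es i.+1.
    by apply: (sorted_ltn_nth ltn_trans 0 srt) => //; rewrite inE; lia.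
  move: hlt lt; case E: (nth 0 es i.+1) => [|e1] //= hlt lt.
  apply: leq_ltn_trans hlt; apply: mle; lia.
rewrite sL /=.
have WE : W = m.
  apply: (eq_from_nth (x0 := 0)); first by rewrite szW szm.
  move=> j; rewrite szW => jn; rewrite nthW //.
  elim: j jn => [|j IH] jn.
    case h0: (0 \in es); first by rewrite cnt_S // cnt_idx // h0 addn1 hidx.
    rewrite cnt_S // h0 addn0 count_all0 /=; last by apply/allP.
    by move: (memA 0 jn); rewrite h0 /=; lia.
  case h: (j.+1 \in es); first by rewrite cnt_S // cnt_idx // h addn1 hidx.
  rewrite cnt_S // h addn0 cS IH; last by lia.
  move: (memA _ jn) (mle j j.+1 (leqnSn j) jn); rewrite h /=; lia.
by rewrite WE (sorted_sort leq_trans sm) eqxx.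
Qed.

Lemma coefN_char n (T : {set 'I_n}) m :
  coef_N T m = (sorted leq m && (size m == n) && (T == Aset n m)).
Proof.
rewrite /coef_N.
rewrite (eq_card (B := [pred ix : (size (elems T)).-tuple 'I_(maxl m).+1 |
   (sorted leq m && (size m == n) && (T == Aset n m)) &&
   (map val ix == [seq nth 0 m e | e <- elems T])])); last first.
  by move=> ix; rewrite !inE NE_equiv // size_map size_tuple.
rewrite card_andb card_val_tuple ?muln1 ?size_map //.
by apply/allP => x /mapP [e _ ->]; exact: nth_maxl.
Qed.

Lemma okdP t : forall pv d u us vs, okd pv d u us vs t =
  [&& size us == size t, size vs == size t,
   all (fun s => nth 0 (pv :: vs) s <= nth 0 vs s) (iota 0 (size t)),
   all (fun s => nth false t s ==> (nth 0 (pv :: vs) s < nth 0 vs s)) (iota 0 (size t)) &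
   all (fun s => (nth false (u :: us) s && ~~ nth false us s) ==>
                 (nth false t s != nth false (d :: t) s)) (iota 0 (size t))].
Proof.
elim: t => [|e t IH] pv d u [|up us] [|v vs] //=; first by rewrite !andbF.
rewrite IH -[1]/(1 + 0) iotaDl !all_map !eqSS.
have re : forall a b c s1 s2 X Y Z : bool,
  [&& a, b, c, s1, s2, X, Y & Z] = [&& s1, s2, a && X, b && Y, c & Z].
  by move=> [] [] [] [] [] [] [] [].
by rewrite re.
Qed.

Lemma wtE u us :
  wt u us = count (fun s => nth false (u :: us) s && ~~ nth false us s) (iota 0 (size us)).
Proof. by elim: us u => [|up us IH] u //=; rewrite IH -[1]/(1 + 0) iotaDl count_map. Qed.

Lemma int_nlt (a b : int) : a != b -> (~~ (a < b)%R) = (b < a)%R.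
Proof. by move=> ne; rewrite -leNgt le_eqVlt eq_sym (negbTE ne). Qed.

Lemma wt_ups n w : is_signed_perm n w -> wt true (ups n w) = peB n w + varsigma w.
Proof.
move=> hp; rewrite wtE size_ups /peB /PeB size_filter /varsigma.
have sw := perm_size_w hp.
case: n hp sw => [|n] hp sw.
  by move: sw; case: w hp => // _ _; rewrite /piv /= ltxx.
rewrite /= -[1]/(1 + 0) iotaDl !count_map addnC.
have ne0 := piv_neq hp (ltn0Sn n).
rewrite (int_nlt ne0); congr (_ + _).
apply: eq_in_count => s; rewrite mem_iota => /andP [_]; rewrite add0n => sn.
change ((nth false (ups n.+1 w) s && ~~ nth false (ups n.+1 w) s.+1) =
        ((piv w s < piv w s.+1)%R && (piv w s.+2 < piv w s.+1)%R)).
rewrite !nth_ups //; try lia.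
by rewrite int_nlt //; apply: (piv_neq hp); lia.
Qed.

Lemma memDn n (t : n.-tuple bool) x :
  (x \in [seq val i | i in [set i : 'I_n | tnth t i]]) = (x < n) && nth false t x.
Proof.
apply/mapP/andP => [[i]|[xn hx]].
  by rewrite mem_enum inE => hi ->; split; [exact: ltn_ord | rewrite -(tnth_nth false)].
by exists (Ordinal xn); rewrite // mem_enum inE (tnth_nth false).
Qed.

Lemma memD1 n (t : n.-tuple bool) x :
  (x \in [seq (val i).+1 | i in [set i : 'I_n | tnth t i]]) =
  [&& 0 < x, x.-1 < n & nth false t x.-1].
Proof.
apply/mapP/and3P => [[i]|[x0 xn hx]].
  by rewrite mem_enum inE => hi ->; split => //; [exact: ltn_ord | rewrite -(tnth_nth false)].
exists (Ordinal xn); rewrite ?mem_enum ?inE ?(tnth_nth false) //=; lia.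
Qed.

Lemma adm_link n w (t : n.-tuple bool) : is_signed_perm n w ->
  admissible w [set i : 'I_n | tnth t i] =
  all (fun s => (nth false (true :: ups n w) s && ~~ nth false (ups n w) s) ==>
                (nth false t s != nth false (false :: t) s)) (iota 0 n).
Proof.
move=> hp; rewrite /admissible /PeB all_filter.
have sw := perm_size_w hp.
case: n t hp sw => [|n] t hp sw.
  by case: w sw hp => // _ _; rewrite /piv /= ltxx.
rewrite /= -[1]/(1 + 0) iotaDl !all_map andbC.
have ne0 := piv_neq hp (ltn0Sn n).
rewrite (int_nlt ne0) memDn /=.
congr andb; first by case: (nth false t 0); case: (piv w 1 < 0)%R.
apply: eq_in_all => s; rewrite mem_iota => /andP [_]; rewrite add0n => sn.
change ((((piv w s < piv w s.+1)%R && (piv w s.+2 < piv w s.+1)%R) ==>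
         (s.+1 \in [seq val i | i in [set i : 'I_n.+1 | tnth t i]])
         (+) (s.+1 \in [seq (val i).+1 | i in [set i : 'I_n.+1 | tnth t i]])) =
        ((nth false (ups n.+1 w) s && ~~ nth false (ups n.+1 w) s.+1) ==>
         (nth false t s.+1 != nth false t s))).
rewrite memDn memD1 !nth_ups //; try lia.
rewrite int_nlt //; last by apply: (piv_neq hp); lia.
have -> : s < n.+1 by lia.
have -> : s.+1 < n.+1 by lia.
by case: (nth false t s); case: (nth false t s.+1).
Qed.

Lemma sorted_link (m : seq nat) n :
  (sorted leq m && (size m == n)) =
  (size m == n) && all (fun s => nth 0 (0 :: m) s <= nth 0 m s) (iota 0 n).
Proof.
case: (eqVneq (size m) n) => [<-|]; rewrite ?andbF ?andbT //=.
have -> : sorted leq m = path leq 0 m by case: m.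
apply/(pathP 0)/allP => H s.
  by rewrite mem_iota => /andP [_ /H].
by move=> sm; apply: H; rewrite mem_iota.
Qed.

Lemma subset_link n m (t : n.-tuple bool) :
  ([set i : 'I_n | tnth t i] \subset Aset n m) =
  all (fun s => nth false t s ==> (nth 0 (0 :: m) s < nth 0 m s)) (iota 0 n).
Proof.
apply/subsetP/allP => H s.
  rewrite mem_iota => /andP [_ sn]; have := H (Ordinal sn); rewrite !inE (tnth_nth false) /=.
  by case: (nth false t s) => // /(_ isT).
rewrite inE => hs; have := H s; rewrite mem_iota ltn_ord /= => /(_ isT).
by rewrite (tnth_nth false) in hs; rewrite hs inE.
Qed.

Lemma sum_bool_card (T : finType) (P b : pred T) :
  \sum_(i | P i) (b i : nat) = #|[pred i | P i && b i]|.
Proof.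
rewrite card_predE [RHS]big_mkcond [LHS]big_mkcond; apply: eq_bigr => i _.
by case: (P i); case: (b i).
Qed.

Lemma card_set_tuple n (R : pred {set 'I_n}) :
  #|[pred D | R D]| = #|[pred t : n.-tuple bool | R [set i | tnth t i]]|.
Proof.
rewrite !card_predE.
rewrite (reindex (fun t : n.-tuple bool => [set i | tnth t i])) //.
exists (fun D : {set 'I_n} => [tuple i \in D | i < n]) => [t _ | D _].
  by apply: eq_from_tnth => i; rewrite tnth_mktuple inE.
by apply/setP => i; rewrite !inE tnth_mktuple.
Qed.

Lemma coefL_char n (D : {set 'I_n}) m :
  coef_L D m = (sorted leq m && (size m == n)) && (D \subset Aset n m).
Proof.
rewrite /coef_L.
under eq_bigr => T _ do rewrite coefN_char.
rewrite big_mkcond (bigD1 (Aset n m)) //= big1 => [|T /negbTE hT]; last first.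
  by rewrite hT andbF; case: (D \subset T).
by rewrite eqxx andbT addn0; case: (D \subset Aset n m); rewrite ?andbT ?andbF.
Qed.

Lemma rhs_link n w m : is_signed_perm n w ->
  \sum_(D : {set 'I_n} | admissible w D) coef_L D m = G n 0 false true (ups n w) m.
Proof.
move=> hp.
under eq_bigr => D _ do rewrite coefL_char.
rewrite sum_bool_card card_set_tuple /G; apply: eq_card => t; rewrite !inE.
rewrite okdP size_ups size_tuple eqxx /= adm_link // sorted_link subset_link.
by case: (all _ _); case: (size m == n); case: (all _ _); case: (all _ _).
Qed.

Lemma all_maxl (m : seq nat) : all (fun v => v <= maxl m) m.
Proof.
elim: m => //= x m IH; rewrite leq_maxl /=.
by apply: sub_all IH => v vm; apply: leq_trans vm (leq_maxr _ _).
Qed.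

Unset Implicit Arguments.

Theorem theorem6p6 (n : nat) (w : seq int) :
  is_signed_perm n w ->
  forall m : seq nat,
    coef_dB n w m =
    2 ^ (peB n w + varsigma w) *
    \sum_(D : {set 'I_n} | admissible w D) coef_L D m.
Proof.
move=> hp m.
rewrite lhs_link // rhs_link // -wt_ups //.
have [I1 _] := @main_inv (maxl m) (2 * maxl m).+1 (ups n w) (ltnSn _) m (all_maxl m).
have := I1 0; rewrite size_ups => ->.
by rewrite -G_Ysf size_ups mulnC.
Qed.
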